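(* Let $\mathcal{X},\mathcal{Y},\mathcal{A},\mathcal{B}$ be systems with $\mathcal{X}$ trivial ($\mathsf{T}[\mathcal{X}]=\mathsf{I}$) and $\mathcal{A}$ classical ($\mathsf{T}[\mathcal{A}]=\mathsf{C}$), while $\mathcal{Y}$ and $\mathcal{B}$ have arbitrary types and dimensions. Then the resource type $\mathsf{I}\,\mathsf{T}[\mathcal{Y}]\rightarrow\mathsf{C}\,\mathsf{T}[\mathcal{B}]$ is $\mathsf{T}$-trivial: every nonsignaling resource $R_{\mathcal{A}\mathcal{B}|\mathcal{X}\mathcal{Y}}$ of this type (and these dimensions) is LOSR-free.
   Context: A system $\mathcal{H}$ is specified by a dimension $d[\mathcal{H}]\ge 1$ (Hilbert space $\mathbb{C}^{d[\mathcal{H}]}$ with computational basis $\{|i\rangle\}$) and a type $\mathsf{T}[\mathcal{H}]\in\{\mathsf{I},\mathsf{C},\mathsf{Q}\}$ (trivial, classical, quantum); a system is trivial iff its dimension is $1$. $\mathsf{D}(\mathcal{H})$ denotes density matrices. A (bipartite nonsignaling) resource with Alice's input $\mathcal{X}$ and output $\mathcal{A}$ and Bob's input $\mathcal{Y}$ and output $\mathcal{B}$ is a linear map $R$ from operators on $\mathcal{X}\otimes\mathcal{Y}$ to operators on $\mathcal{A}\otimes\mathcal{B}$ which is completely positive, satisfies $\mathrm{tr}\,R[\xi\otimes\psi]=1$ for all $\xi\in\mathsf{D}(\mathcal{X}),\psi\in\mathsf{D}(\mathcal{Y})$, and is nonsignaling: $\mathrm{tr}_{\mathcal{A}}R[\xi\otimes\psi]$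 does not depend on $\xi$ and $\mathrm{tr}_{\mathcal{B}}R[\xi\otimes\psi]$ does not depend on $\psi$. If an output, say $\mathcal{A}$, is classical then $\langle i_{\mathcal{A}}|R[\xi\otimes\psi]|j_{\mathcal{A}}\rangle=0$ for all $i\ne j$, $\xi,\psi$; if an input, say $\mathcal{X}$, is classical then $R[|i_{\mathcal{X}}\rangle\langle j_{\mathcal{X}}|\otimes\psi]=0$ for all $i\neq j$ and $\psi$ (analogously for $\mathcal{B}$, $\mathcal{Y}$). The type of $R$ is written $\mathsf{T}[\mathcal{X}]\mathsf{T}[\mathcal{Y}]\rightarrow\mathsf{T}[\mathcal{A}]\mathsf{T}[\mathcal{B}]$. A single-party resource $R_{\mathcal{A}|\mathcal{X}}$ is a CPTP map from operators on $\mathcal{X}$ to operators on $\mathcal{A}$ satisfying the analogous classicality constraints. A resource is LOSR-free if $R_{\mathcal{A}\mathcal{B}|\mathcal{X}\mathcal{Y}}=\sum_i p_i\,R^i_{\mathcal{A}|\mathcal{X}}\otimes R^i_{\mathcal{B}|\mathcal{Y}}$ for a probability distribution $(p_i)$ and single-party resources of the corresponding types and dimensions. A resource type is $\mathsf{T}$-trivial if every resource of that type is LOSR-free. *)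

(* Defs.v *)
From HB Require Import structures.
From mathcomp Require Import all_boot all_order all_algebra.
From mathcomp Require Import mxtens.

Set Implicit Arguments.
Unset Strict Implicit.
Unset Printing Implicit Defensive.

Import Order.TTheory GRing.Theory Num.Theory.
Local Open Scope ring_scope.

Inductive stype := TI | TC | TQ.

Definition wf_sys (d : nat) (t : stype) : Prop :=
  (0 < d)%N /\ (t = TI <-> d = 1%N).

Section Quantum.
Variable C : numClosedFieldType.

Definition adjmx m n (A : 'M[C]_(m, n)) : 'M[C]_(n, m) := (map_mx Num.conj A)^T.

Definition psd n (A : 'M[C]_n) : Prop :=
  forall v : 'cV[C]_n, 0 <= (adjmx v *m A *m v) 0 0.

Definition density n (rho : 'M[C]_n) : Prop := psd rho /\ \tr rho = 1.

(** amplification id_k (x) Phi, acting on 'M_(k * n) = M_k (x) M_n *)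
Definition ampl k n m (Phi : 'M[C]_n -> 'M[C]_m) (M : 'M[C]_(k * n))
  : 'M[C]_(k * m) :=
  \sum_(i < k) \sum_(j < k)
     (delta_mx i j *t Phi (\matrix_(a, b) M (mxtens_index (i, a))
                                            (mxtens_index (j, b)))).

Definition completely_positive n m (Phi : 'M[C]_n -> 'M[C]_m) : Prop :=
  forall (k : nat) (M : 'M[C]_(k * n)), psd M -> psd (ampl Phi M).

Definition ptrA dA dB (M : 'M[C]_(dA * dB)) : 'M[C]_dB :=
  \matrix_(b, b') \sum_(a < dA) M (mxtens_index (a, b)) (mxtens_index (a, b')).
Definition ptrB dA dB (M : 'M[C]_(dA * dB)) : 'M[C]_dA :=
  \matrix_(a, a') \sum_(b < dB) M (mxtens_index (a, b)) (mxtens_index (a', b)).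

Definition single_resource dX dA (tX tA : stype)
  (Phi : 'M[C]_dX -> 'M[C]_dA) : Prop :=
  [/\ linear Phi,
      completely_positive Phi,
      (forall M, \tr (Phi M) = \tr M),
      (tA = TC -> forall xi, density xi ->
         forall i j : 'I_dA, i != j -> Phi xi i j = 0) &
      (tX = TC -> forall i j : 'I_dX, i != j -> Phi (delta_mx i j) = 0)].

Definition resource dX dY dA dB (tX tY tA tB : stype)
  (R : 'M[C]_(dX * dY) -> 'M[C]_(dA * dB)) : Prop :=
  [/\ linear R /\ completely_positive R,
      (forall xi psi, density xi -> density psi -> \tr (R (xi *t psi)) = 1),
      (forall xi xi' psi, density xi -> density xi' -> density psi ->
         ptrA (R (xi *t psi)) = ptrA (R (xi' *t psi))),
      (forall xi psi psi', density xi -> density psi -> density psi' ->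
         ptrB (R (xi *t psi)) = ptrB (R (xi *t psi'))) &
      [/\ (tA = TC -> forall xi psi, density xi -> density psi ->
            forall (i j : 'I_dA) (b b' : 'I_dB), i != j ->
              R (xi *t psi) (mxtens_index (i, b)) (mxtens_index (j, b')) = 0),
          (tB = TC -> forall xi psi, density xi -> density psi ->
            forall (a a' : 'I_dA) (i j : 'I_dB), i != j ->
              R (xi *t psi) (mxtens_index (a, i)) (mxtens_index (a', j)) = 0),
          (tX = TC -> forall psi, density psi ->
            forall i j : 'I_dX, i != j -> R (delta_mx i j *t psi) = 0) &
          (tY = TC -> forall xi, density xi ->
            forall i j : 'I_dY, i != j -> R (xi *t delta_mx i j) = 0)]].

Definition tens_map dX dY dA dB
  (PhiA : 'M[C]_dX -> 'M[C]_dA) (PhiB : 'M[C]_dY -> 'M[C]_dB)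
  (M : 'M[C]_(dX * dY)) : 'M[C]_(dA * dB) :=
  \sum_(x < dX) \sum_(x' < dX) \sum_(y < dY) \sum_(y' < dY)
    M (mxtens_index (x, y)) (mxtens_index (x', y'))
      *: (PhiA (delta_mx x x') *t PhiB (delta_mx y y')).

Definition losr_free dX dY dA dB (tX tY tA tB : stype)
  (R : 'M[C]_(dX * dY) -> 'M[C]_(dA * dB)) : Prop :=
  exists (n : nat) (p : 'I_n -> C)
         (RA : 'I_n -> 'M[C]_dX -> 'M[C]_dA)
         (RB : 'I_n -> 'M[C]_dY -> 'M[C]_dB),
    [/\ (forall i, 0 <= p i),
        \sum_(i < n) p i = 1,
        (forall i, single_resource tX tA (RA i)),
        (forall i, single_resource tY tB (RB i)) &
        (forall M, R M = \sum_(i < n) p i *: tens_map (RA i) (RB i) M)].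

Definition T_trivial dX dY dA dB (tX tY tA tB : stype) : Prop :=
  forall R : 'M[C]_(dX * dY) -> 'M[C]_(dA * dB),
    resource tX tY tA tB R -> losr_free tX tY tA tB R.

End Quantum.

(* Main.v *)
Require Import Defs.
From HB Require Import structures.
From mathcomp Require Import all_boot all_order all_algebra.
From mathcomp Require Import mxtens.
From mathcomp Require Import ring.
Set Implicit Arguments.
Unset Strict Implicit.
Unset Printing Implicit Defensive.
Import Order.TTheory GRing.Theory Num.Theory.
Local Open Scope ring_scope.

Section Gen.
Variable C : numClosedFieldType.

Section Lin.
Variables (U V : lmodType C) (f : U -> V).
Hypothesis Hf : linear f.
Lemma lin0 : f 0 = 0.
Proof.
have H := Hf 1 0 0; rewrite !scale1r addr0 in H.
by apply: (addrI (f 0)); rewrite addr0 -H.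
Qed.
Lemma linD u v : f (u + v) = f u + f v.
Proof. by have := Hf 1 u v; rewrite !scale1r. Qed.
Lemma linZ a u : f (a *: u) = a *: f u.
Proof. by have := Hf a u 0; rewrite !addr0 lin0 addr0. Qed.
Lemma lin_sum (I : finType) (F : I -> U) : f (\sum_i F i) = \sum_i f (F i).
Proof.
symmetry; apply: (big_rec2 (fun y x => y = f x)); first by rewrite lin0.
by move=> i y x _ ->; rewrite linD.
Qed.
End Lin.

Lemma linear_comp (U V W : lmodType C) (f : U -> V) (g : V -> W) :
  linear f -> linear g -> linear (fun u => g (f u)).
Proof. by move=> Hf Hg a u v /=; rewrite Hf Hg. Qed.

Lemma adjmxM m n p (A : 'M[C]_(m, n)) (B : 'M[C]_(n, p)) :
  adjmx (A *m B) = adjmx B *m adjmx A.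
Proof. by rewrite /adjmx map_mxM trmx_mul. Qed.

Lemma adjmxE m n (A : 'M[C]_(m, n)) i j : adjmx A i j = (A j i)^*.
Proof. by rewrite /adjmx !mxE. Qed.

Definition compr n m (f : 'I_m -> 'I_n) (w : 'I_m -> C) (A : 'M[C]_n) : 'M[C]_m :=
  \matrix_(r, s) ((w r)^* * A (f r) (f s) * w s).

Lemma compr_eq n m (f : 'I_m -> 'I_n) (w : 'I_m -> C) (A : 'M[C]_n) :
  let P := \matrix_(t, r) ((t == f r)%:R * w r) : 'M[C]_(n, m) in
  compr f w A = adjmx P *m A *m P.
Proof.
move=> P; apply/matrixP => r s; rewrite !mxE.
rewrite (bigD1 (f s)) //= big1 => [|t /negbTE ne]; last by rewrite !mxE ne mul0r mulr0.
rewrite addr0 !mxE eqxx mul1r; congr (_ * _).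
rewrite (bigD1 (f r)) //= big1 => [|t /negbTE ne]; last by rewrite !mxE ne mul0r rmorph0 mul0r.
by rewrite addr0 !mxE eqxx mul1r.
Qed.

Lemma psd_compr n m (f : 'I_m -> 'I_n) (w : 'I_m -> C) (A : 'M[C]_n) :
  psd A -> psd (compr f w A).
Proof.
move=> HA v; rewrite compr_eq -!mulmxA mulmxA -adjmxM mulmxA.
exact: HA.
Qed.

Lemma quad2 (B : 'M[C]_2) (s : C) : psd B ->
  0 <= s^* * B 0 0 * s + s^* * B 0 1 + B 1 0 * s + B 1 1.
Proof.
move=> HB; have := HB (\matrix_(k, _) (if (k : nat) == 0%N then s else 1)).
rewrite !mxE !big_ord_recl !big_ord0 !addr0 !mxE !big_ord_recl !big_ord0 !addr0.
rewrite !adjmxE !mxE /= rmorph1 !mul1r !mulr1.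
have -> : lift ord0 ord0 = 1 :> 'I_2 by apply: val_inj.
have -> : ord0 = 0 :> 'I_2 by apply: val_inj.
by congr (0 <= _); ring.
Qed.

Lemma le0_anti (x : C) : 0 <= x -> 0 <= - x -> x = 0.
Proof. by move=> h1 h2; apply/eqP; rewrite eq_le h1 andbT -oppr_ge0. Qed.

Lemma psd_diag n (A : 'M[C]_n) i : psd A -> 0 <= A i i.
Proof.
move=> HA.
have := quad2 1 (psd_compr (fun _ : 'I_2 => i)
          (fun k : 'I_2 => if (k : nat) == 0%N then 1 else 0) HA).
rewrite !mxE /= rmorph1 rmorph0 !mul1r !mulr0 !mul0r !addr0 mulr1. by rewrite mulr1.
Qed.

Lemma psd_off n (A : 'M[C]_n) i j : psd A -> A i i = 0 -> A j j = 0 -> A i j = 0.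
Proof.
move=> HA Hi Hj.
pose B := compr (fun k : 'I_2 => if (k : nat) == 0%N then i else j) (fun _ => 1) A.
have HB : psd B by apply: psd_compr.
have E s : 0 <= s^* * A i j + A j i * s.
  have := quad2 s HB; rewrite /B !mxE /= rmorph1 !mul1r !mulr1 Hi Hj mulr0 mul0r add0r addr0.
  done.
have E1 := E 1; have E2 := E (-1); have E3 := E 'i; have E4 := E (- 'i).
rewrite rmorph1 mul1r mulr1 in E1.
rewrite rmorphN rmorph1 mulrN1 mulN1r -opprD in E2.
have X : A i j + A j i = 0 by apply: le0_anti.
have ci : ('i : C)^* = - 'i := conjCi C.
move: E3 E4 => /= E3 E4.
have ci' : (- 'i : C)^* = 'i by rewrite rmorphN /= ci opprK.
rewrite ci in E3; rewrite ci' in E4.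
have Y : 'i * (A j i - A i j) = 0.
  apply: le0_anti.
    have -> : 'i * (A j i - A i j) = - 'i * A i j + A j i * 'i by ring.
    done.
  have -> : - ('i * (A j i - A i j)) = 'i * A i j + A j i * - 'i by ring.
  done.
move/eqP: Y; rewrite mulf_eq0 (negbTE (neq0Ci C)) /= subr_eq0 => /eqP Y.
move: X; rewrite Y -mulr2n => /eqP; rewrite mulrn_eq0 /= => /eqP //.
Qed.

Lemma psd_trace0 n (A : 'M[C]_n) : psd A -> \tr A = 0 -> A = 0.
Proof.
move=> HA Ht.
have D i : A i i = 0.
  by apply: (psumr_eq0P (P := predT) (F := fun i => A i i)) => // k _; apply: psd_diag.
by apply/matrixP => i j; rewrite mxE; apply: psd_off.
Qed.

Lemma psd_scale n (A : 'M[C]_n) c : 0 <= c -> psd A -> psd (c *: A).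
Proof.
move=> Hc HA v; rewrite -scalemxAr -scalemxAl mxE.
exact: mulr_ge0 (HA v).
Qed.

Lemma adjmxK m n (A : 'M[C]_(m, n)) : adjmx (adjmx A) = A.
Proof. by apply/matrixP => i j; rewrite !adjmxE conjCK. Qed.

Lemma rank1E n (u : 'cV[C]_n) r s : (u *m adjmx u) r s = u r 0 * (u s 0)^*.
Proof. by rewrite !mxE big_ord1 adjmxE. Qed.

Lemma psd_rank1 n (u : 'cV[C]_n) : psd (u *m adjmx u).
Proof.
move=> v; rewrite mulmxA -mulmxA -[adjmx v *m u]adjmxK adjmxM adjmxK.
set x := adjmx u *m v.
by rewrite mxE big_ord1 adjmxE mulrC mul_conjC_ge0.
Qed.

Lemma psd_trace_ge0 n (A : 'M[C]_n) : psd A -> 0 <= \tr A.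
Proof. by move=> HA; apply: sumr_ge0 => i _; apply: psd_diag. Qed.

Lemma density_span n (V : lmodType C) (f : 'M[C]_n -> V) : linear f ->
  (forall rho, density rho -> f rho = 0) -> forall N, f N = 0.
Proof.
move=> Hf H0.
have Hp P : psd P -> \tr P != 0 -> f P = 0.
  move=> HP Ht.
  have -> : P = \tr P *: ((\tr P)^-1 *: P) by rewrite scalerA divff // scale1r.
  rewrite (linZ Hf) H0 ?scaler0 //; split.
    by apply: psd_scale => //; rewrite invr_ge0 psd_trace_ge0.
  by rewrite mxtraceZ mulVf.
pose e i := delta_mx i 0 : 'cV[C]_n.
have Ed i j : delta_mx i j = e i *m adjmx (e j).
  apply/matrixP => r s; rewrite !mxE big_ord1 adjmxE !mxE rmorph_nat.
  by case: (r == i); case: (s == j); rewrite /= ?mulr1 ?mul1r ?mulr0 ?mul0r.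
have Eii i : f (delta_mx i i) = 0.
  apply: Hp; first by rewrite Ed; apply: psd_rank1.
  rewrite /mxtrace (bigD1 i) //= !mxE !eqxx big1 ?addr0 ?oner_neq0 // => k /negbTE nk; by rewrite mxE nk.
have E1 i j : (e i + e j) *m adjmx (e i + e j) =
   delta_mx i i + delta_mx i j + delta_mx j i + delta_mx j j.
  apply/matrixP => r s; rewrite rank1E !mxE rmorphD /= !rmorph_nat.
  by case: (r == i); case: (r == j); case: (s == i); case: (s == j); rewrite /=; ring.
have E2 i j : (e i + 'i *: e j) *m adjmx (e i + 'i *: e j) =
   delta_mx i i + (- 'i) *: delta_mx i j + 'i *: delta_mx j i + (- ('i * 'i)) *: delta_mx j j.
  apply/matrixP => r s; rewrite rank1E !mxE rmorphD /= !rmorphM /= !rmorph_nat (conjCi C).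
  by case: (r == i); case: (r == j); case: (s == i); case: (s == j); rewrite /=; ring.
have trD i j : \tr (delta_mx i j : 'M[C]_n) = (i == j)%:R.
  rewrite /mxtrace (bigD1 i) //= !mxE eqxx big1 ?addr0 // => k /negbTE nk.
  by rewrite mxE nk.
have two : (2%:R : C) != 0 by rewrite pnatr_eq0.
have Eij i j : f (delta_mx i j) = 0.
  case: (eqVneq i j) => [<-|ij]; first exact: Eii.
  have ji : (j == i) = false by rewrite eq_sym (negbTE ij).
  have F1 : f (delta_mx i j) + f (delta_mx j i) = 0.
    have h : f ((e i + e j) *m adjmx (e i + e j)) = 0.
      apply: Hp; first exact: psd_rank1.
      by rewrite E1 !mxtraceD !trD !eqxx (negbTE ij) ji /= ?mulr0n ?mulr1n !addr0 -mulr2n pnatr_eq0.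
    by move: h; rewrite E1 !(linD Hf) !Eii add0r addr0.
  have F2 : 'i *: (f (delta_mx j i) - f (delta_mx i j)) = 0.
    have h : f ((e i + 'i *: e j) *m adjmx (e i + 'i *: e j)) = 0.
      apply: Hp; first exact: psd_rank1.
      rewrite E2 !mxtraceD !mxtraceZ !trD !eqxx (negbTE ij) ji /= ?mulr0n ?mulr1n !mulr0 !addr0 mulr1.
      by rewrite -expr2 sqrCi opprK -mulr2n pnatr_eq0.
    move: h; rewrite E2 !(linD Hf) !(linZ Hf) !Eii scaler0 add0r addr0.
    by rewrite scalerBr scaleNr addrC.
  move/eqP: F2; rewrite scaler_eq0 (negbTE (neq0Ci C)) /= subr_eq0 => /eqP F2.
  move: F1; rewrite F2 => /eqP; rewrite -mulr2n -scaler_nat scaler_eq0 pnatr_eq0 /=.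
  by move/eqP.
move=> N; rewrite (matrix_sum_delta N) (lin_sum Hf) big1 // => i _.
by rewrite (lin_sum Hf) big1 // => j _; rewrite (linZ Hf) Eij scaler0.
Qed.

Definition blkij k n (M : 'M[C]_(k * n)) (i j : 'I_k) : 'M[C]_n :=
  \matrix_(a, b) M (mxtens_index (i, a)) (mxtens_index (j, b)).

Lemma ampl_entry k n m (Phi : 'M[C]_n -> 'M[C]_m) (M : 'M[C]_(k * n)) i j c c' :
  ampl Phi M (mxtens_index (i, c)) (mxtens_index (j, c')) = Phi (blkij M i j) c c'.
Proof.
rewrite /ampl summxE.
have -> : forall F : 'I_k -> 'I_k -> 'M[C]_(k * m),
   \sum_(i0 < k) (\sum_(j0 < k) F i0 j0) (mxtens_index (i, c)) (mxtens_index (j, c'))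
   = \sum_(i0 < k) \sum_(j0 < k) F i0 j0 (mxtens_index (i, c)) (mxtens_index (j, c')).
  by move=> F; apply: eq_bigr => i0 _; rewrite summxE.
rewrite (bigD1 i) //= [X in _ + X]big1 => [|i' ni]; last first.
  apply: big1 => j' _; rewrite tensmxE mxE.
  by rewrite eq_sym (negbTE ni) /= mul0r.
rewrite addr0 (bigD1 j) //= [X in _ + X]big1 => [|j' nj]; last first.
  by rewrite tensmxE mxE eqxx /= eq_sym (negbTE nj) mul0r.
by rewrite addr0 tensmxE mxE !eqxx mul1r.
Qed.

Lemma cp_psd n m (Phi : 'M[C]_n -> 'M[C]_m) (N : 'M[C]_n) :
  completely_positive Phi -> psd N -> psd (Phi N).
Proof.
move=> HP HN.
pose M1 := compr (fun r : 'I_(1 * n) => (mxtens_unindex r).2) (fun _ => 1) N.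
have H1 : psd (ampl Phi M1) by apply: HP; apply: psd_compr.
have -> : Phi N = compr (fun a : 'I_m => mxtens_index ((ord0 : 'I_1), a)) (fun _ => 1) (ampl Phi M1).
  apply/matrixP => a b; rewrite mxE ampl_entry rmorph1 mul1r mulr1.
  congr (Phi _ a b); apply/matrixP => x y; rewrite !mxE !mxtens_indexK /=.
  by rewrite rmorph1 mul1r mulr1.
exact: psd_compr.
Qed.

Lemma tens_lin m n p q (A : 'M[C]_(m, n)) : linear (fun N : 'M[C]_(p, q) => A *t N).
Proof. by move=> c u v; apply/matrixP => r s; rewrite !mxE; ring. Qed.

Lemma submx_lin p q p' q' (g : 'I_p' -> 'I_p) (h : 'I_q' -> 'I_q) :
  linear (fun X : 'M[C]_(p, q) => \matrix_(r, s) X (g r) (h s) : 'M[C]_(p', q')).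
Proof. by move=> c u v; apply/matrixP => r s; rewrite !mxE. Qed.

Lemma entry_lin p q (r : 'I_p) (s : 'I_q) : linear (fun X : 'M[C]_(p, q) => (X r s : C^o)).
Proof. by move=> c u v; rewrite !mxE. Qed.

Lemma trace_lin n : linear (fun X : 'M[C]_n => (\tr X : C^o)).
Proof. by move=> c u v; rewrite mxtraceD mxtraceZ. Qed.

Lemma scale_lin m n (c : C) : linear (fun X : 'M[C]_(m, n) => c *: X).
Proof. by move=> a u v; rewrite scalerDr !scalerA mulrC. Qed.

Lemma sum_tens m n (F : 'I_(m * n) -> C) :
  \sum_k F k = \sum_(a < m) \sum_(b < n) F (mxtens_index (a, b)).
Proof.
rewrite (reindex (@mxtens_index m n)) /=; last first.
  by exists (@mxtens_unindex m n) => x _; [apply: mxtens_indexK | apply: mxtens_unindexK].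
rewrite pair_big /=; apply: eq_bigr => -[a b] _ //.
Qed.

Lemma density_delta n (i : 'I_n) : density (delta_mx i i : 'M[C]_n).
Proof.
have -> : delta_mx i i = delta_mx i 0 *m adjmx (delta_mx i 0 : 'cV[C]_n).
  apply/matrixP => r s; rewrite !mxE big_ord1 adjmxE !mxE rmorph_nat.
  by case: (r == i); case: (s == i); rewrite /= ?mulr1 ?mul1r ?mulr0 ?mul0r.
split; first exact: psd_rank1.
rewrite /mxtrace (bigD1 i) //= big1 => [|k nk]; last by rewrite rank1E !mxE (negbTE nk) mul0r.
by rewrite rank1E !mxE !eqxx /= mulr1n rmorph1 mulr1 addr0.
Qed.

Lemma density1 : density (1%:M : 'M[C]_1).
Proof.
have -> : (1%:M : 'M[C]_1) = delta_mx 0 0 by apply/matrixP => i j; rewrite !mxE !ord1.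
exact: density_delta.
Qed.
Lemma idxK m n (i : 'I_m) (j : 'I_n) : mxtens_unindex (mxtens_index (i, j)) = (i, j).
Proof. exact: mxtens_indexK. Qed.

Lemma density_span_sc n (f : 'M[C]_n -> C) :
  (forall c u v, f (c *: u + v) = c * f u + f v) ->
  (forall rho, density rho -> f rho = 0) -> forall N, f N = 0.
Proof. by move=> Hf; apply: (density_span (V := C^o) (f := f)). Qed.
End Gen.

Unset Implicit Arguments.
Set Strict Implicit.

Theorem proposition1 (C : numClosedFieldType) (dX dY dA dB : nat) (tY tB : stype) :
  wf_sys dX TI -> wf_sys dY tY -> wf_sys dA TC -> wf_sys dB tB ->
  T_trivial C dX dY dA dB TI tY TC tB.
Proof.
move=> [_ [HX _]] [HY0 _] [HA0 _] [HB0 _].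
have dX1 := HX erefl; subst dX.
move=> R [[Rlin Rcp] Rtr NSA NSB [ClA ClB ClX ClY]].
pose y0 : 'I_dY := Ordinal HY0.
pose xi1 : 'M[C]_1 := 1%:M.
have Dxi1 : density xi1 := density1 C.
pose T (N : 'M[C]_dY) := R (xi1 *t N).
have Tlin : linear T by apply: (linear_comp (tens_lin xi1) Rlin).
pose blk (a : 'I_dA) (N : 'M[C]_dY) : 'M[C]_dB :=
  \matrix_(b, b') T N (mxtens_index (a, b)) (mxtens_index (a, b')).
have blklin a : linear (blk a).
  exact: (linear_comp Tlin (submx_lin _ _)).
pose psi0 : 'M[C]_dY := delta_mx y0 y0.
have Dpsi0 : density psi0 := density_delta C y0.
pose p a := \tr (blk a psi0).
have psdT N : psd N -> psd (T N).
  move=> HN; apply: cp_psd Rcp _.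
  have -> : xi1 *t N = compr (fun r : 'I_(1 * dY) => (mxtens_unindex r).2) (fun _ => 1) N.
    by apply/matrixP => r s; rewrite !mxE !ord1 eqxx mulr1n rmorph1 mulr1.
  exact: psd_compr.
have psdblk a N : psd N -> psd (blk a N).
  move=> HN; have -> : blk a N = compr (fun b => mxtens_index (a, b)) (fun _ => 1) (T N).
    by apply/matrixP => b b'; rewrite !mxE rmorph1 mul1r mulr1.
  exact/psd_compr/psdT.
have trblk a N : \tr (blk a N) = ptrB (T N) a a.
  by rewrite /mxtrace mxE; apply: eq_bigr => b _; rewrite mxE.
have F1 a psi : density psi -> \tr (blk a psi) = p a.
  by move=> Dpsi; rewrite /p !trblk /T (NSB xi1 psi psi0).
have F1' a N : \tr (blk a N) = p a * \tr N.
  apply/eqP; rewrite -subr_eq0; apply/eqP; move: N.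
  apply: (density_span_sc (f := fun N => \tr (blk a N) - p a * \tr N)).
    move=> c u v /=; rewrite (linD (blklin a)) (linZ (blklin a)) mxtraceD mxtraceZ.
    rewrite mxtraceD mxtraceZ.
    ring.
  by move=> rho Drho; rewrite F1 // (proj2 Drho) mulr1 subrr.
have F2 a : 0 <= p a by apply/psd_trace_ge0/psdblk/(proj1 Dpsi0).
have F3 : \sum_a p a = 1.
  rewrite -(Rtr xi1 psi0) // /mxtrace sum_tens; apply: eq_bigr => a _.
  by rewrite /p /mxtrace; apply: eq_bigr => b _; rewrite mxE.
have F4 N a a' b b' : a != a' -> T N (mxtens_index (a, b)) (mxtens_index (a', b')) = 0.
  move=> ne; move: N; apply: (density_span_sc (f := fun N => T N (mxtens_index (a, b)) (mxtens_index (a', b')))).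
    by move=> c u v; rewrite Tlin !mxE.
  by move=> rho Drho; apply: ClA.
have F5 a : p a = 0 -> forall N, blk a N = 0.
  move=> pa0; apply: density_span (blklin a) _ => rho Drho.
  by apply: psd_trace0; [apply/psdblk/(proj1 Drho) | rewrite F1].
have [a0 Ha0] : exists a, p a != 0.
  case: (pickP (fun a => p a != 0)) => [a Ha|H]; first by exists a.
  exfalso; move: F3; rewrite big1 => [/eqP|a _]; first by rewrite eq_sym oner_eq0.
  by move/negbFE/eqP: (H a).
pose q a := if p a != 0 then a else a0.
have Hq a : p (q a) != 0 by rewrite /q; case: ifP.
pose RA (a : 'I_dA) (N : 'M[C]_1) : 'M[C]_dA := N 0 0 *: delta_mx a a.
pose RB (a : 'I_dA) (N : 'M[C]_dY) : 'M[C]_dB := (p (q a))^-1 *: blk (q a) N.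
have RBlin a : linear (RB a) by apply: (linear_comp (blklin (q a)) (scale_lin (p (q a))^-1)).
have K a N : p a *: (delta_mx a a *t RB a N) = delta_mx a a *t blk a N.
  case: (eqVneq (p a) 0) => [pa0|pa0].
    by rewrite pa0 scale0r F5 // tensmx0.
  have qa : q a = a by rewrite /q pa0.
  by rewrite /RB qa (linZ (tens_lin _)) scalerA mulfV // scale1r.
exists dA, p, RA, RB; split => //.
- move=> a; split.
  + by move=> c u v; rewrite /RA !mxE scalerDl scalerA.
  + move=> k M HM.
    have -> : ampl (RA a) M = compr (fun r : 'I_(k * dA) => mxtens_index ((mxtens_unindex r).1, (0 : 'I_1)))
        (fun r => ((mxtens_unindex r).2 == a)%:R) M.
      apply/matrixP => r s.
      case: (mxtens_indexP r) => i c; case: (mxtens_indexP s) => j c'.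
      rewrite ampl_entry !mxE !mxtens_indexK /= rmorph_nat.
      by case: (c == a); case: (c' == a); rewrite /= ?mulr1n ?mulr0n; ring.
    exact: psd_compr.
  + by move=> N; rewrite /RA mxtraceZ (proj2 (density_delta C a)) mulr1 /mxtrace big_ord1.
  + move=> _ xi _ i j nij; rewrite /RA !mxE.
    case: (eqVneq i a) nij => [-> naj|nia _].
      by rewrite eq_sym (negbTE naj) /= mulr0n mulr0.
    by rewrite /= mulr0n mulr0.
  + by [].
- move=> a; split.
  + exact: RBlin.
  + move=> k M HM.
    pose h (r : 'I_(k * (1 * dY))) : 'I_(k * dY) :=
      mxtens_index ((mxtens_unindex r).1, (mxtens_unindex (mxtens_unindex r).2).2).
    pose M2 := compr h (fun _ => 1) M.
    have H2 : psd (ampl R M2) by apply: Rcp; apply: psd_compr.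
    pose g (r : 'I_(k * dB)) : 'I_(k * (dA * dB)) :=
      mxtens_index ((mxtens_unindex r).1, mxtens_index (q a, (mxtens_unindex r).2)).
    have -> : ampl (RB a) M = (p (q a))^-1 *: compr g (fun _ => 1) (ampl R M2).
      apply/matrixP => r s.
      case: (mxtens_indexP r) => i b; case: (mxtens_indexP s) => j b'.
      rewrite ampl_entry !mxE /g !mxtens_indexK /= ampl_entry rmorph1 mul1r mulr1 /T.
      congr (_ * R _ _ _); apply/matrixP => x y.
      case: (mxtens_indexP x) => o y1; case: (mxtens_indexP y) => o' y2.
      rewrite tensmxE !mxE /h (idxK i) (idxK j) /= rmorph1 mul1r mulr1 !ord1 eqxx mulr1n mul1r.
      by congr (M (mxtens_index (_, _)) (mxtens_index (_, _))); [rewrite -[RHS]/((mxtens_unindex (mxtens_index ((0 : 'I_1), y1))).2) idxK | rewrite -[RHS]/((mxtens_unindex (mxtens_index ((0 : 'I_1), y2))).2) idxK].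
    apply: psd_scale; first by rewrite invr_ge0.
    exact: psd_compr.
  + by move=> N; rewrite /RB mxtraceZ F1' mulrA mulVf // mul1r.
  + move=> HtB xi Dxi i j nij; rewrite /RB !mxE.
    by rewrite (ClB HtB xi1 xi) // mulr0.
  + move=> HtY i j nij; rewrite /RB.
    have -> : blk (q a) (delta_mx i j) = 0.
      by apply/matrixP => b b'; rewrite !mxE /T (ClY HtY xi1) // mxE.
    by rewrite scaler0.
- move=> M.
  pose M' := blkij M 0 0.
  have EM : M = xi1 *t M'.
    apply/matrixP => r s.
    case: (mxtens_indexP r) => o y; case: (mxtens_indexP s) => o' y'.
    by rewrite tensmxE !mxE !ord1 eqxx mulr1n mul1r.
  have tm a : tens_map (RA a) (RB a) M = delta_mx a a *t RB a M'.
    have L := linear_comp (RBlin a) (tens_lin (delta_mx a a)).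
    rewrite /tens_map !big_ord1 [in RHS](matrix_sum_delta M') (lin_sum L).
    apply: eq_bigr => y _; rewrite (lin_sum L); apply: eq_bigr => y' _.
    rewrite (linZ L) /RA !mxE eqxx scale1r; congr (_ *: _).
  under eq_bigr => a _ do rewrite tm K.
  rewrite {1}EM -/(T M').
  apply/matrixP => r s.
  case: (mxtens_indexP r) => c b; case: (mxtens_indexP s) => c' b'.
  rewrite summxE.
  under eq_bigr => a _ do rewrite tensmxE mxE.
  case: (eqVneq c c') => [<-|ne].
    rewrite (bigD1 c) //= big1 => [|a nac]; last by rewrite eq_sym (negbTE nac) /= mul0r.
    by rewrite eqxx mulr1n mul1r addr0 mxE.
  rewrite F4 // big1 // => a _.
  case: (eqVneq c a) => [<-|_]; last by rewrite /= mul0r.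
  by rewrite eq_sym (negbTE ne) /= mul0r.
Qed.
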